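(* For all well-typed terms $\Gamma\vdash t:A$ and $\Gamma\vdash u:A$ of $\lambda^{SR}$: $\Gamma\vdash t\equiv u:A$ holds in $\lambda^{SR}$ if and only if $[\![t]\!]=[\![u]\!]:[\![\Gamma]\!]\to[\![A]\!]$ in every categorical model of $\lambda^{SR}$ (every cartesian closed category with a strong pointed endofunctor, for every interpretation of the base type).
   Context: Types: $A,B ::= \iota \mid 1 \mid A\times B \mid A\to B \mid \Diamond A$, where $\iota$ is a base type. A context $\Gamma$ is a list $x_1:A_1,\dots,x_n:A_n$ of distinct variables. Terms of the simply typed part: variables, $()$, $\langle t,u\rangle$, $\mathsf{fst}\,t$, $\mathsf{snd}\,t$, $\lambda x.t$, $t\,u$, with the standard typing rules. The calculus $\lambda^{SR}$ adds: (letmap) if $\Gamma\vdash t:\Diamond A$ and $\Gamma,x:A\vdash u:B$ then $\Gamma\vdash \mathsf{letmap}\ x=t\ \mathsf{in}\ u:\Diamond B$; (ret) if $\Gamma\vdash t:A$ then $\Gamma\vdash\mathsf{ret}\,t:\Diamond A$. Its equational theory $\equiv$ is the least congruence on well-typed terms containing the simply typed $\beta\eta$-laws ($t\equiv()$ for $t:1$; $t\equiv\langle\mathsf{fst}\,t,\mathsf{snd}\,t\rangle$; $\mathsf{fst}\langle t,u\rangle\equiv t$; $\mathsf{snd}\langle t,u\rangle\equiv u$; $t\equiv\lambda x.\,t\,x$ with $x$ fresh; $(\lambda x.t)\,u\equiv t[u/x]$) and: $t\equiv\mathsf{letmap}\ x=t\ \mathsf{in}\ x$; $\mathsf{letmap}\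 y=(\mathsf{letmap}\ x=t\ \mathsf{in}\ u)\ \mathsf{in}\ u'\equiv\mathsf{letmap}\ x=t\ \mathsf{in}\ u'[u/y]$; $\mathsf{letmap}\ x=\mathsf{ret}\,t\ \mathsf{in}\ u\equiv\mathsf{ret}(u[t/x])$ (terms implicitly weakened where needed; $[\cdot/\cdot]$ is capture-avoiding substitution). A categorical model of $\lambda^{SR}$ is a cartesian closed category $\mathcal C$ with an endofunctor $D$, a strength $\mathrm{st}_{X,Y}:X\times DY\to D(X\times Y)$ (natural, with $D\pi_2\circ\mathrm{st}_{1,X}=\pi_2$ and $D\alpha\circ\mathrm{st}_{X\times Y,Z}=\mathrm{st}_{X,Y\times Z}\circ(\mathrm{id}\times\mathrm{st}_{Y,Z})\circ\alpha$), and a natural transformation $\eta:\mathrm{Id}\Rightarrow D$ that is strong: $\mathrm{st}_{X,Y}\circ(\mathrm{id}_X\times\eta_Y)=\eta_{X\times Y}$. Given an object interpreting $\iota$, types/contexts/simply typed terms are interpreted in the standard cartesian closed way with $[\![\Diamond A]\!]=D[\![A]\!]$, $[\![\mathsf{letmap}\ x=t\ \mathsf{in}\ u]\!]=D[\![u]\!]\circ\mathrm{st}\circ\langle\mathrm{id},[\![t]\!]\rangle$, and $[\![\mathsf{ret}\,t]\!]=\eta\circ[\![t]\!]$. *)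

(* Defs.v *)
From Stdlib Require Import List.
Import ListNotations.

Inductive ty : Type :=
| tyBase : ty
| tyUnit : ty
| tyProd : ty -> ty -> ty
| tyArr  : ty -> ty -> ty
| tyDia  : ty -> ty.

(* Contexts: lists of types; the head is the most recently bound variable,
   i.e. the context  x1:A1, ..., xn:An  is the list [An; ...; A1]. *)
Definition ctx := list ty.

Inductive var : ctx -> ty -> Type :=
| Vz : forall G A, var (A :: G) A
| Vs : forall G A B, var G A -> var (B :: G) A.
Arguments Vz {G A}.
Arguments Vs {G A B} _.

Inductive tm (G : ctx) : ty -> Type :=
| tvar : forall A, var G A -> tm G A
| tunit : tm G tyUnit
| tpair : forall A B, tm G A -> tm G B -> tm G (tyProd A B)
| tfst : forall A B, tm G (tyProd A B) -> tm G A
| tsnd : forall A B, tm G (tyProd A B) -> tm G B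
| tlam : forall A B, tm (A :: G) B -> tm G (tyArr A B)
| tapp : forall A B, tm G (tyArr A B) -> tm G A -> tm G B
| tletmap : forall A B, tm G (tyDia A) -> tm (A :: G) B -> tm G (tyDia B)
| tret : forall A, tm G A -> tm G (tyDia A).
Arguments tvar {G A} _.
Arguments tunit {G}.
Arguments tpair {G A B} _ _.
Arguments tfst {G A B} _.
Arguments tsnd {G A B} _.
Arguments tlam {G A B} _.
Arguments tapp {G A B} _ _.
Arguments tletmap {G A B} _ _.
Arguments tret {G A} _.

Definition ren (G G' : ctx) := forall A, var G A -> var G' A.
Definition sub (G G' : ctx) := forall A, var G A -> tm G' A.

Definition rcons {G G' A} (x : var G' A) (r : ren G G') : ren (A :: G) G' :=
  fun B v =>
    match v in var L B0
      return (match L with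
              | nil => unit
              | A0 :: G0 => var G' A0 -> (forall X, var G0 X -> var G' X) -> var G' B0
              end) with
    | Vz => fun x _ => x
    | Vs w => fun _ r => r _ w
    end x r.

Definition scons {G G' A} (u : tm G' A) (s : sub G G') : sub (A :: G) G' :=
  fun B v =>
    match v in var L B0
      return (match L with
              | nil => unit
              | A0 :: G0 => tm G' A0 -> (forall X, var G0 X -> tm G' X) -> tm G' B0
              end) with
    | Vz => fun u _ => u
    | Vs w => fun _ s => s _ w
    end u s.

Definition lift_ren {G G' A} (r : ren G G') : ren (A :: G) (A :: G') :=
  rcons Vz (fun B v => Vs (r B v)).

Fixpoint rename {G G' A} (r : ren G G') (t : tm G A) : tm G' A :=
  match t in tm _ A return tm G' A with
  | tvar x => tvar (r _ x)
  | tunit => tunit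
  | tpair a b => tpair (rename r a) (rename r b)
  | tfst a => tfst (rename r a)
  | tsnd a => tsnd (rename r a)
  | tlam b => tlam (rename (lift_ren r) b)
  | tapp f a => tapp (rename r f) (rename r a)
  | tletmap a b => tletmap (rename r a) (rename (lift_ren r) b)
  | tret a => tret (rename r a)
  end.

Definition wk {G A B} (t : tm G A) : tm (B :: G) A :=
  rename (fun C v => Vs v) t.

Definition lift_sub {G G' A} (s : sub G G') : sub (A :: G) (A :: G') :=
  scons (tvar Vz) (fun B v => wk (s B v)).

Fixpoint subst {G G' A} (s : sub G G') (t : tm G A) : tm G' A :=
  match t in tm _ A return tm G' A with
  | tvar x => s _ x
  | tunit => tunit
  | tpair a b => tpair (subst s a) (subst s b)
  | tfst a => tfst (subst s a)
  | tsnd a => tsnd (subst s a)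
  | tlam b => tlam (subst (lift_sub s) b)
  | tapp f a => tapp (subst s f) (subst s a)
  | tletmap a b => tletmap (subst s a) (subst (lift_sub s) b)
  | tret a => tret (subst s a)
  end.

Definition ids {G} : sub G G := fun A x => tvar x.

Definition subst1 {G A B} (t : tm (A :: G) B) (u : tm G A) : tm G B :=
  subst (scons u ids) t.

(* u'[u/y] where u' : (y:B)::G |- _ and u : (x:A)::G |- B, result in (x:A)::G
   (u' implicitly weakened by x) *)
Definition subst1_wk {G A B C} (u' : tm (B :: G) C) (u : tm (A :: G) B)
  : tm (A :: G) C :=
  subst (scons u (fun X v => tvar (Vs v))) u'.

Inductive teq : forall G A, tm G A -> tm G A -> Prop :=
| eq_refl_ : forall G A (t : tm G A), teq _ _ t t
| eq_sym_ : forall G A (t u : tm G A), teq _ _ t u -> teq _ _ u t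
| eq_trans_ : forall G A (t u v : tm G A), teq _ _ t u -> teq _ _ u v -> teq _ _ t v
| eq_pair : forall G A B (t t' : tm G A) (u u' : tm G B),
    teq _ _ t t' -> teq _ _ u u' -> teq _ _ (tpair t u) (tpair t' u')
| eq_fst : forall G A B (t t' : tm G (tyProd A B)), teq _ _ t t' -> teq _ _ (tfst t) (tfst t')
| eq_snd : forall G A B (t t' : tm G (tyProd A B)), teq _ _ t t' -> teq _ _ (tsnd t) (tsnd t')
| eq_lam : forall G A B (t t' : tm (A :: G) B), teq _ _ t t' -> teq _ _ (tlam t) (tlam t')
| eq_app : forall G A B (t t' : tm G (tyArr A B)) (u u' : tm G A),
    teq _ _ t t' -> teq _ _ u u' -> teq _ _ (tapp t u) (tapp t' u')
| eq_letmap : forall G A B (t t' : tm G (tyDia A)) (u u' : tm (A :: G) B),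
    teq _ _ t t' -> teq _ _ u u' -> teq _ _ (tletmap t u) (tletmap t' u')
| eq_ret : forall G A (t t' : tm G A), teq _ _ t t' -> teq _ _ (tret t) (tret t')
| eq_unit_eta : forall G (t : tm G tyUnit), teq _ _ t tunit
| eq_prod_eta : forall G A B (t : tm G (tyProd A B)), teq _ _ t (tpair (tfst t) (tsnd t))
| eq_fst_beta : forall G A B (t : tm G A) (u : tm G B), teq _ _ (tfst (tpair t u)) t
| eq_snd_beta : forall G A B (t : tm G A) (u : tm G B), teq _ _ (tsnd (tpair t u)) u
| eq_arr_eta : forall G A B (t : tm G (tyArr A B)),
    teq _ _ t (tlam (tapp (wk t) (tvar Vz)))
| eq_arr_beta : forall G A B (t : tm (A :: G) B) (u : tm G A),
    teq _ _ (tapp (tlam t) u) (subst1 t u)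
| eq_letmap_id : forall G A (t : tm G (tyDia A)), teq _ _ t (tletmap t (tvar Vz))
| eq_letmap_assoc : forall G A B C (t : tm G (tyDia A)) (u : tm (A :: G) B)
    (u' : tm (B :: G) C),
    teq _ _ (tletmap (tletmap t u) u') (tletmap t (subst1_wk u' u))
| eq_letmap_ret : forall G A B (t : tm G A) (u : tm (A :: G) B),
    teq _ _ (tletmap (tret t) u) (tret (subst1 u t)).
Arguments teq {G A} _ _.

Record CCC : Type := {
  obj : Type;
  hom : obj -> obj -> Type;
  idm : forall X, hom X X;
  comp : forall {X Y Z}, hom Y Z -> hom X Y -> hom X Z;
  comp_assoc : forall X Y Z W (f : hom X Y) (g : hom Y Z) (h : hom Z W),
      comp h (comp g f) = comp (comp h g) f;
  comp_id_l : forall X Y (f : hom X Y), comp (idm Y) f = f;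
  comp_id_r : forall X Y (f : hom X Y), comp f (idm X) = f;
  one : obj;
  bang : forall X, hom X one;
  bang_unique : forall X (f : hom X one), f = bang X;
  prod : obj -> obj -> obj;
  pi1 : forall X Y, hom (prod X Y) X;
  pi2 : forall X Y, hom (prod X Y) Y;
  pairing : forall {Z X Y}, hom Z X -> hom Z Y -> hom Z (prod X Y);
  pi1_pairing : forall Z X Y (f : hom Z X) (g : hom Z Y), comp (pi1 X Y) (pairing f g) = f;
  pi2_pairing : forall Z X Y (f : hom Z X) (g : hom Z Y), comp (pi2 X Y) (pairing f g) = g;
  pairing_unique : forall Z X Y (h : hom Z (prod X Y)),
      h = pairing (comp (pi1 X Y) h) (comp (pi2 X Y) h);
  (* exponentials: expo X Y = Y^X *)
  expo : obj -> obj -> obj;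
  ev : forall X Y, hom (prod (expo X Y) X) Y;
  curry : forall {Z X Y}, hom (prod Z X) Y -> hom Z (expo X Y);
  ev_curry : forall Z X Y (f : hom (prod Z X) Y),
      comp (ev X Y) (pairing (comp (curry f) (pi1 Z X)) (pi2 Z X)) = f;
  curry_unique : forall Z X Y (h : hom Z (expo X Y)),
      h = curry (comp (ev X Y) (pairing (comp h (pi1 Z X)) (pi2 Z X)))
}.
Arguments idm {c} X.
Arguments comp {c X Y Z} _ _.
Arguments one {c}.
Arguments bang {c} X.
Arguments prod {c} _ _.
Arguments pi1 {c} X Y.
Arguments pi2 {c} X Y.
Arguments pairing {c Z X Y} _ _.
Arguments expo {c} _ _.
Arguments ev {c} X Y.
Arguments curry {c Z X Y} _.

Definition prodmap {C : CCC} {X Y X' Y'} (f : hom C X X') (g : hom C Y Y')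
  : hom C (prod X Y) (prod X' Y') :=
  pairing (comp f (pi1 X Y)) (comp g (pi2 X Y)).

Definition assoc {C : CCC} (X Y Z : obj C) : hom C (prod (prod X Y) Z) (prod X (prod Y Z)) :=
  pairing (comp (pi1 X Y) (pi1 (prod X Y) Z))
          (pairing (comp (pi2 X Y) (pi1 (prod X Y) Z)) (pi2 (prod X Y) Z)).

Record StrongPointed (C : CCC) : Type := {
  Dob : obj C -> obj C;
  Dmap : forall {X Y}, hom C X Y -> hom C (Dob X) (Dob Y);
  Dmap_id : forall X, Dmap (idm X) = idm (Dob X);
  Dmap_comp : forall X Y Z (f : hom C X Y) (g : hom C Y Z),
      Dmap (comp g f) = comp (Dmap g) (Dmap f);
  st : forall X Y, hom C (prod X (Dob Y)) (Dob (prod X Y));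
  st_natural : forall X Y X' Y' (f : hom C X X') (g : hom C Y Y'),
      comp (st X' Y') (prodmap f (Dmap g)) = comp (Dmap (prodmap f g)) (st X Y);
  st_unit : forall X, comp (Dmap (pi2 one X)) (st one X) = pi2 one (Dob X);
  st_assoc : forall X Y Z,
      comp (Dmap (assoc X Y Z)) (st (prod X Y) Z)
      = comp (st X (prod Y Z)) (comp (prodmap (idm X) (st Y Z)) (assoc X Y (Dob Z)));
  eta : forall X, hom C X (Dob X);
  eta_natural : forall X Y (f : hom C X Y), comp (Dmap f) (eta X) = comp (eta Y) f;
  eta_strong : forall X Y, comp (st X Y) (prodmap (idm X) (eta Y)) = eta (prod X Y)
}.
Arguments Dob {C} _ _.
Arguments Dmap {C} _ {X Y} _.
Arguments st {C} _ X Y.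
Arguments eta {C} _ X.

Section Interp.
Context {C : CCC} (M : StrongPointed C) (b : obj C).

Fixpoint ity (A : ty) : obj C :=
  match A with
  | tyBase => b
  | tyUnit => one
  | tyProd A1 A2 => prod (ity A1) (ity A2)
  | tyArr A1 A2 => expo (ity A1) (ity A2)
  | tyDia A1 => Dob M (ity A1)
  end.

Fixpoint ictx (G : ctx) : obj C :=
  match G with
  | nil => one
  | A :: G0 => prod (ictx G0) (ity A)
  end.

Fixpoint ivar {G A} (x : var G A) : hom C (ictx G) (ity A) :=
  match x in var G A return hom C (ictx G) (ity A) with
  | @Vz G0 A0 => pi2 (ictx G0) (ity A0)
  | @Vs G0 A0 B0 w => comp (ivar w) (pi1 (ictx G0) (ity B0))
  end.

Fixpoint itm {G A} (t : tm G A) : hom C (ictx G) (ity A) :=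
  match t in tm _ A return hom C (ictx G) (ity A) with
  | tvar x => ivar x
  | tunit => bang (ictx G)
  | tpair a c => pairing (itm a) (itm c)
  | @tfst _ A1 A2 a => comp (pi1 (ity A1) (ity A2)) (itm a)
  | @tsnd _ A1 A2 a => comp (pi2 (ity A1) (ity A2)) (itm a)
  | tlam c => curry (itm c)
  | @tapp _ A1 A2 f a => comp (ev (ity A1) (ity A2)) (pairing (itm f) (itm a))
  | @tletmap _ A1 A2 a c =>
      comp (Dmap M (itm c)) (comp (st M (ictx G) (ity A1)) (pairing (idm (ictx G)) (itm a)))
  | @tret _ A1 a => comp (eta M (ity A1)) (itm a)
  end.
End Interp.

(* Main.v *)
Require Import Defs.
From Stdlib Require Import List FunctionalExtensionality ProofIrrelevance Setoid Morphisms ClassicalEpsilon PropExtensionality.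
Import ListNotations.

Definition var_cons_elim {A G} (P : forall B, var (A::G) B -> Prop)
  (Hz : P A Vz) (Hs : forall B (w : var G B), P B (Vs w)) : forall B v, P B v :=
  fun B v =>
  match v as v' in var L B0 return
    (match L as L' return var L' B0 -> Prop with
     | [] => fun _ => True
     | A0 :: G0 => fun v0 => forall P : forall B, var (A0::G0) B -> Prop,
          P A0 Vz -> (forall B (w : var G0 B), P B (Vs w)) -> P B0 v0 end) v'
  with
  | Vz => fun P hz hs => hz
  | Vs w => fun P hz hs => hs _ w
  end P Hz Hs.

Definition var_nil {A} (v : var [] A) : False :=
  match v in var L _ return match L with [] => False | _ => True end with
  | Vz => I | Vs _ => I end.

Definition E {G} : sub [] G := fun A v => False_rect _ (var_nil v).

Lemma fun_cons_ext {A G} {T : ty -> Type} (f g : forall B, var (A::G) B -> T B) :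
  f A Vz = g A Vz -> (forall B w, f B (Vs w) = g B (Vs w)) -> f = g.
Proof.
  intros Hz Hs. apply functional_extensionality_dep; intro B.
  apply functional_extensionality; intro v. revert B v.
  apply (var_cons_elim (fun B v => f B v = g B v)); auto.
Qed.

Lemma fun_nil_ext {T : ty -> Type} (f g : forall B, var [] B -> T B) : f = g.
Proof.
  apply functional_extensionality_dep; intro B.
  apply functional_extensionality; intro v. destruct (var_nil v).
Qed.

Lemma fun1_ext {A} {T : ty -> Type} (f g : forall B, var [A] B -> T B) :
  f A Vz = g A Vz -> f = g.
Proof.
  intro H. apply fun_cons_ext; auto. intros B w; destruct (var_nil w).
Qed.

Lemma rename_rename : forall G A (t : tm G A) G' G'' (r : ren G G') (r' : ren G' G''),
  rename r' (rename r t) = rename (fun B x => r' B (r B x)) t.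
Proof.
  induction t; intros; simpl; f_equal; auto;
  try (rewrite IHt; f_equal; apply fun_cons_ext; reflexivity);
  try (rewrite IHt2; f_equal; apply fun_cons_ext; reflexivity).
Qed.

Lemma subst_rename : forall G A (t : tm G A) G' G'' (r : ren G G') (s : sub G' G''),
  subst s (rename r t) = subst (fun B x => s B (r B x)) t.
Proof.
  induction t; intros; simpl; f_equal; auto;
  try (rewrite IHt; f_equal; apply fun_cons_ext; reflexivity);
  try (rewrite IHt2; f_equal; apply fun_cons_ext; reflexivity).
Qed.

Lemma rename_subst : forall G A (t : tm G A) G' G'' (s : sub G G') (r : ren G' G''),
  rename r (subst s t) = subst (fun B x => rename r (s B x)) t.
Proof.
  induction t; intros; simpl; f_equal; auto;
  try (rewrite IHt; f_equal; apply fun_cons_ext; [reflexivity|];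
       intros; simpl; unfold wk; rewrite !rename_rename; reflexivity);
  try (rewrite IHt2; f_equal; apply fun_cons_ext; [reflexivity|];
       intros; simpl; unfold wk; rewrite !rename_rename; reflexivity).
Qed.

Lemma subst_subst : forall G A (t : tm G A) G' G'' (s : sub G G') (s' : sub G' G''),
  subst s' (subst s t) = subst (fun B x => subst s' (s B x)) t.
Proof.
  induction t; intros; simpl; f_equal; auto;
  try (rewrite IHt; f_equal; apply fun_cons_ext; [reflexivity|];
       intros; simpl; unfold wk; rewrite subst_rename, rename_subst; reflexivity);
  try (rewrite IHt2; f_equal; apply fun_cons_ext; [reflexivity|];
       intros; simpl; unfold wk; rewrite subst_rename, rename_subst; reflexivity).
Qed.

Lemma subst_ids : forall G A (t : tm G A), subst (fun B x => tvar x) t = t.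
Proof.
  induction t; simpl; f_equal; auto;
  try (rewrite <- IHt at 2; f_equal; apply fun_cons_ext; reflexivity);
  try (rewrite <- IHt2 at 2; f_equal; apply fun_cons_ext; reflexivity).
Qed.

Lemma rename_as_subst : forall G A (t : tm G A) G' (r : ren G G'),
  rename r t = subst (fun B x => tvar (r B x)) t.
Proof.
  induction t; intros; simpl; f_equal; auto;
  try (rewrite IHt; f_equal; apply fun_cons_ext; reflexivity);
  try (rewrite IHt2; f_equal; apply fun_cons_ext; reflexivity).
Qed.
#[export] Instance teq_equiv G A : Equivalence (@teq G A).
Proof. split; red; intros; eauto using teq. Qed.
#[export] Instance pair_prop G A B : Proper (teq ==> teq ==> teq) (@tpair G A B).
Proof. repeat red; intros; apply eq_pair; auto. Qed.
#[export] Instance fst_prop G A B : Proper (teq ==> teq) (@tfst G A B).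
Proof. repeat red; intros; apply eq_fst; auto. Qed.
#[export] Instance snd_prop G A B : Proper (teq ==> teq) (@tsnd G A B).
Proof. repeat red; intros; apply eq_snd; auto. Qed.
#[export] Instance lam_prop G A B : Proper (teq ==> teq) (@tlam G A B).
Proof. repeat red; intros; apply eq_lam; auto. Qed.
#[export] Instance app_prop G A B : Proper (teq ==> teq ==> teq) (@tapp G A B).
Proof. repeat red; intros; apply eq_app; auto. Qed.
#[export] Instance letmap_prop G A B : Proper (teq ==> teq ==> teq) (@tletmap G A B).
Proof. repeat red; intros; apply eq_letmap; auto. Qed.
#[export] Instance ret_prop G A : Proper (teq ==> teq) (@tret G A).
Proof. repeat red; intros; apply eq_ret; auto. Qed.

Lemma subst_lift_wk {G G' A B} (s : sub G G') (t : tm G A) :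
  subst (lift_sub (A:=B) s) (wk t) = wk (subst s t).
Proof. unfold wk. rewrite subst_rename, rename_subst. reflexivity. Qed.

Lemma subst_subst1 {G G' A B} (s : sub G G') (t : tm (A::G) B) (u : tm G A) :
  subst s (subst1 t u) = subst1 (subst (lift_sub s) t) (subst s u).
Proof.
  unfold subst1. rewrite !subst_subst. f_equal. apply fun_cons_ext; [reflexivity|].
  intros; simpl. unfold wk. rewrite subst_rename. simpl. unfold ids.
  symmetry; apply subst_ids.
Qed.

Lemma subst_subst1_wk {G G' A B C} (s : sub G G') (u' : tm (B::G) C) (u : tm (A::G) B) :
  subst (lift_sub s) (subst1_wk u' u) = subst1_wk (subst (lift_sub s) u') (subst (lift_sub s) u).
Proof.
  unfold subst1_wk. rewrite !subst_subst. f_equal. apply fun_cons_ext; [reflexivity|].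
  intros; simpl. unfold wk. rewrite subst_rename. simpl.
  rewrite rename_as_subst. reflexivity.
Qed.

Lemma teq_subst : forall G A (t u : tm G A), teq t u ->
  forall G' (s : sub G G'), teq (subst s t) (subst s u).
Proof.
  intros G A t u H; induction H; intros; simpl; eauto using teq.
  - rewrite subst_lift_wk. apply eq_arr_eta.
  - rewrite subst_subst1. apply eq_arr_beta.
  - rewrite subst_subst1_wk. apply eq_letmap_assoc.
  - rewrite subst_subst1. apply eq_letmap_ret.
Qed.

Lemma teq_rename {G G' A} (r : ren G G') (t u : tm G A) : teq t u -> teq (rename r t) (rename r u).
Proof. intro H; rewrite !rename_as_subst; apply teq_subst; auto. Qed.

#[export] Instance subst_prop G G' A (s : sub G G') : Proper (teq ==> teq) (@subst G G' A s).
Proof. repeat red; intros; apply teq_subst; auto. Qed.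
#[export] Instance rename_prop G G' A (r : ren G G') : Proper (teq ==> teq) (@rename G G' A r).
Proof. repeat red; intros; apply teq_rename; auto. Qed.
#[export] Instance wk_prop G A B : Proper (teq ==> teq) (@wk G A B).
Proof. repeat red; intros; apply teq_rename; auto. Qed.

Lemma teq_subst_pw : forall G A (t : tm G A) G' (s s' : sub G G'),
  (forall B x, teq (s B x) (s' B x)) -> teq (subst s t) (subst s' t).
Proof.
  induction t; intros; simpl; try reflexivity; auto;
  repeat match goal with H : forall _ _ _, _ -> teq _ _ |- _ =>
    (rewrite (H _ _ s') by auto) || (rewrite (H _ (lift_sub s) (lift_sub s')) by
      (apply var_cons_elim; [reflexivity| intros; simpl; apply teq_rename; auto]))
  end; reflexivity.
Qed.

Lemma teq_subst_pw1 {X G' A} (t : tm [X] A) (s s' : sub [X] G') :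
  teq (s X Vz) (s' X Vz) -> teq (subst s t) (subst s' t).
Proof.
  intro H; apply teq_subst_pw. apply var_cons_elim; auto. intros B w; destruct (var_nil w).
Qed.
Section Cat.
Context {C : CCC}.

Lemma pairing_ext {Z X Y : obj C} (h k : hom C Z (prod X Y)) :
  comp (pi1 X Y) h = comp (pi1 X Y) k -> comp (pi2 X Y) h = comp (pi2 X Y) k -> h = k.
Proof. intros H1 H2. rewrite (pairing_unique _ _ _ _ h), (pairing_unique _ _ _ _ k), H1, H2. reflexivity. Qed.

Lemma comp_pairing {W Z X Y : obj C} (f : hom C Z X) (g : hom C Z Y) (h : hom C W Z) :
  comp (pairing f g) h = pairing (comp f h) (comp g h).
Proof.
  apply pairing_ext; rewrite comp_assoc, ?pi1_pairing, ?pi2_pairing; reflexivity.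
Qed.

Lemma pairing_pi {X Y : obj C} : pairing (pi1 X Y) (pi2 X Y) = idm (prod X Y).
Proof. apply pairing_ext; rewrite ?pi1_pairing, ?pi2_pairing, comp_id_r; reflexivity. Qed.

Lemma bang_comp {X Y : obj C} (h : hom C X Y) : comp (bang Y) h = bang X.
Proof. apply bang_unique. Qed.

Lemma curry_nat {W Z X Y : obj C} (f : hom C (prod Z X) Y) (h : hom C W Z) :
  comp (curry f) h = curry (comp f (pairing (comp h (pi1 W X)) (pi2 W X))).
Proof.
  rewrite (curry_unique _ _ _ _ (comp (curry f) h)). f_equal.
  rewrite <- comp_assoc.
  rewrite <- (ev_curry _ _ _ _ f) at 2. rewrite <- comp_assoc, comp_pairing.
  rewrite pi2_pairing, <- comp_assoc, pi1_pairing. reflexivity.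
Qed.

Lemma ev_curry_app {Z X Y : obj C} (f : hom C (prod Z X) Y) (u : hom C Z X) :
  comp (ev X Y) (pairing (curry f) u) = comp f (pairing (idm Z) u).
Proof.
  rewrite <- (ev_curry _ _ _ _ f) at 2. rewrite <- comp_assoc, comp_pairing.
  rewrite <- comp_assoc, pi1_pairing, pi2_pairing, comp_id_r. reflexivity.
Qed.

Lemma prodmap_pairing {W X Y X' Y' : obj C} (f : hom C X X') (g : hom C Y Y') (h : hom C W X) (k : hom C W Y) :
  comp (prodmap f g) (pairing h k) = pairing (comp f h) (comp g k).
Proof.
  unfold prodmap. rewrite comp_pairing, <- !comp_assoc, pi1_pairing, pi2_pairing. reflexivity.
Qed.

Context (M : StrongPointed C).

Lemma letmap_nat {G G' A B : obj C} (c : hom C (prod G A) B) (a : hom C G (Dob M A)) (h : hom C G' G) :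
  comp (comp (Dmap M c) (comp (st M G A) (pairing (idm G) a))) h =
  comp (Dmap M (comp c (pairing (comp h (pi1 G' A)) (pi2 G' A))))
       (comp (st M G' A) (pairing (idm G') (comp a h))).
Proof.
  rewrite Dmap_comp, <- !comp_assoc. f_equal.
  assert (E1 : pairing (comp h (pi1 G' A)) (pi2 G' A) = prodmap h (idm A)).
  { unfold prodmap. rewrite comp_id_l. reflexivity. }
  rewrite E1.
  rewrite (comp_assoc _ _ _ _ _ _ (st M G' A)), <- st_natural, Dmap_id, <- comp_assoc, prodmap_pairing.
  rewrite comp_id_l, comp_id_r, comp_pairing, comp_id_l. reflexivity.
Qed.

Lemma Dpi2_st {G A : obj C} : comp (Dmap M (pi2 G A)) (st M G A) = pi2 G (Dob M A).
Proof.
  assert (E1 : pi2 G A = comp (pi2 one A) (prodmap (bang G) (idm A))).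
  { unfold prodmap. rewrite pi2_pairing, comp_id_l. reflexivity. }
  rewrite E1, Dmap_comp, <- comp_assoc, <- st_natural, comp_assoc, st_unit, Dmap_id.
  unfold prodmap. rewrite pi2_pairing, comp_id_l. reflexivity.
Qed.

Lemma letmap_ret_sem {G A B : obj C} (t : hom C G A) (u : hom C (prod G A) B) :
  comp (Dmap M u) (comp (st M G A) (pairing (idm G) (comp (eta M A) t)))
  = comp (eta M B) (comp u (pairing (idm G) t)).
Proof.
  assert (E1 : pairing (idm G) (comp (eta M A) t) = comp (prodmap (idm G) (eta M A)) (pairing (idm G) t)).
  { rewrite prodmap_pairing, comp_id_l. reflexivity. }
  rewrite E1, (comp_assoc _ _ _ _ _ _ (prodmap (idm G) (eta M A))), eta_strong.
  rewrite comp_assoc, eta_natural, <- comp_assoc. reflexivity.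
Qed.

Lemma assoc_pairing {W X Y Z : obj C} (f : hom C W X) (g : hom C W Y) (h : hom C W Z) :
  comp (assoc X Y Z) (pairing (pairing f g) h) = pairing f (pairing g h).
Proof.
  unfold assoc. rewrite comp_pairing, comp_pairing, <- !comp_assoc, !pi1_pairing, !pi2_pairing.
  reflexivity.
Qed.

Lemma K2 {G A : obj C} (t : hom C G (Dob M A)) :
  comp (st M G (prod G A)) (pairing (idm G) (comp (st M G A) (pairing (idm G) t)))
  = comp (Dmap M (pairing (pi1 G A) (idm (prod G A)))) (comp (st M G A) (pairing (idm G) t)).
Proof.
  set (s := comp (st M G A) (pairing (idm G) t)).
  assert (E2 : pairing (idm G) s = comp (prodmap (idm G) (st M G A))
     (comp (assoc G G (Dob M A)) (pairing (pairing (idm G) (idm G)) t))).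
  { rewrite assoc_pairing, prodmap_pairing, comp_id_l. reflexivity. }
  assert (SA := st_assoc _ M G G A). rewrite comp_assoc in SA.
  assert (E3 : pairing (pairing (idm G) (idm G)) t = comp (prodmap (pairing (idm G) (idm G)) (Dmap M (idm A))) (pairing (idm G) t)).
  { rewrite prodmap_pairing, Dmap_id, !comp_id_l, comp_id_r. reflexivity. }
  assert (SN := st_natural _ M _ _ _ _ (pairing (idm G) (idm G)) (idm A)).
  assert (E4 : comp (assoc G G A) (prodmap (pairing (idm G) (idm G)) (idm A)) = pairing (pi1 G A) (idm (prod G A))).
  { apply pairing_ext.
    - unfold prodmap, assoc. rewrite comp_assoc, !pi1_pairing, <- comp_assoc, pi1_pairing.
      rewrite comp_assoc, pi1_pairing, comp_id_l. reflexivity.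
    - unfold prodmap, assoc. rewrite comp_assoc, !pi2_pairing.
      rewrite comp_pairing, <- comp_assoc, pi1_pairing, pi2_pairing, comp_assoc, pi2_pairing.
      rewrite !comp_id_l. apply pairing_pi. }
  rewrite E2, (comp_assoc _ _ _ _ _ _ (prodmap (idm G) (st M G A))),
    (comp_assoc _ _ _ _ _ _ _ (comp (st M G (prod G A)) (prodmap (idm G) (st M G A)))), <- SA.
  rewrite E3, <- comp_assoc, (comp_assoc _ _ _ _ _ _ _ (st M (prod G G) A)), SN.
  rewrite <- comp_assoc, comp_assoc, <- Dmap_comp, E4. reflexivity.
Qed.

Lemma letmap_assoc_sem {G A B D : obj C} (t : hom C G (Dob M A)) (u : hom C (prod G A) B)
  (u' : hom C (prod G B) D) :
  comp (Dmap M u') (comp (st M G B) (pairing (idm G)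
     (comp (Dmap M u) (comp (st M G A) (pairing (idm G) t)))))
  = comp (Dmap M (comp u' (pairing (pi1 G A) u))) (comp (st M G A) (pairing (idm G) t)).
Proof.
  set (s := comp (st M G A) (pairing (idm G) t)).
  assert (E1 : pairing (idm G) (comp (Dmap M u) s) = comp (prodmap (idm G) (Dmap M u)) (pairing (idm G) s)).
  { rewrite prodmap_pairing, comp_id_l. reflexivity. }
  rewrite E1, (comp_assoc _ _ _ _ _ _ _ (st M G B)), st_natural.
  rewrite <- comp_assoc. unfold s. rewrite K2.
  rewrite !comp_assoc, <- !Dmap_comp.
  rewrite <- (comp_assoc _ _ _ _ _ (pairing (pi1 G A) (idm _))), prodmap_pairing, comp_id_l, comp_id_r. reflexivity.
Qed.
End Cat.
Section Sound.
Context {C : CCC} (M : StrongPointed C) (b : obj C).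
Notation I := (itm M b).
Notation IC := (ictx M b).

Fixpoint isub {G' G : ctx} : sub G G' -> hom C (IC G') (IC G) :=
  match G return sub G G' -> hom C (IC G') (IC G) with
  | [] => fun _ => bang _
  | A :: G0 => fun s => pairing (isub (fun B x => s B (Vs x))) (I (s A Vz))
  end.

Lemma ivar_isub : forall G A (x : var G A) G' (s : sub G G'),
  comp (ivar M b x) (isub s) = I (s A x).
Proof.
  induction x; intros; simpl.
  - apply pi2_pairing.
  - rewrite <- comp_assoc, pi1_pairing. apply IHx.
Qed.

Lemma isub_vs : forall G G' B (r : ren G G'),
  isub (fun A x => tvar (Vs (B:=B) (r A x))) = comp (isub (fun A x => tvar (r A x))) (pi1 _ _).
Proof.
  induction G; intros; simpl.
  - symmetry; apply bang_unique.
  - rewrite comp_pairing. f_equal. apply (IHG _ _ (fun A x => r A (Vs x))).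
Qed.

Lemma isub_id : forall G, isub (fun A (x : var G A) => tvar x) = idm (IC G).
Proof.
  induction G; simpl.
  - symmetry; apply bang_unique.
  - rewrite (isub_vs G G a (fun A x => x)). rewrite IHG, comp_id_l. apply pairing_pi.
Qed.

Lemma itm_rename : forall G A (t : tm G A) G' (r : ren G G'),
  I (rename r t) = comp (I t) (isub (fun B x => tvar (r B x))).
Proof.
  induction t; intros; simpl.
  - symmetry; apply (ivar_isub _ _ v _ (fun B x => tvar (r B x))).
  - symmetry; apply bang_unique.
  - rewrite comp_pairing, IHt1, IHt2. reflexivity.
  - rewrite IHt, comp_assoc. reflexivity.
  - rewrite IHt, comp_assoc. reflexivity.
  - rewrite IHt, curry_nat. simpl. rewrite (isub_vs _ _ _ r). reflexivity.
  - rewrite IHt1, IHt2, <- comp_assoc, comp_pairing. reflexivity.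
  - rewrite letmap_nat, IHt1, IHt2. simpl. rewrite (isub_vs _ _ _ r). reflexivity.
  - rewrite IHt, comp_assoc. reflexivity.
Qed.

Lemma itm_wk {G A B} (t : tm G A) : I (wk (B:=B) t) = comp (I t) (pi1 _ _).
Proof.
  unfold wk. rewrite itm_rename. rewrite (isub_vs _ _ _ (fun A x => x)), isub_id, comp_id_l.
  reflexivity.
Qed.

Lemma isub_wk : forall G G' B (s : sub G G'),
  isub (fun A x => wk (B:=B) (s A x)) = comp (isub s) (pi1 _ _).
Proof.
  induction G; intros; simpl.
  - symmetry; apply bang_unique.
  - rewrite comp_pairing, itm_wk. f_equal. apply (IHG _ _ (fun A x => s A (Vs x))).
Qed.

Lemma itm_subst : forall G A (t : tm G A) G' (s : sub G G'),
  I (subst s t) = comp (I t) (isub s).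
Proof.
  induction t; intros; simpl.
  - symmetry; apply ivar_isub.
  - symmetry; apply bang_unique.
  - rewrite comp_pairing, IHt1, IHt2. reflexivity.
  - rewrite IHt, comp_assoc. reflexivity.
  - rewrite IHt, comp_assoc. reflexivity.
  - rewrite IHt, curry_nat. simpl. rewrite isub_wk. reflexivity.
  - rewrite IHt1, IHt2, <- comp_assoc, comp_pairing. reflexivity.
  - rewrite letmap_nat, IHt1, IHt2. simpl. rewrite isub_wk. reflexivity.
  - rewrite IHt, comp_assoc. reflexivity.
Qed.

Lemma itm_subst1 {G A B} (t : tm (A::G) B) (u : tm G A) :
  I (subst1 t u) = comp (I t) (pairing (idm _) (I u)).
Proof.
  unfold subst1. rewrite itm_subst. simpl. unfold ids. rewrite isub_id. reflexivity.
Qed.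

Lemma itm_subst1_wk {G A B D} (u' : tm (B::G) D) (u : tm (A::G) B) :
  I (subst1_wk u' u) = comp (I u') (pairing (pi1 _ _) (I u)).
Proof.
  unfold subst1_wk. rewrite itm_subst. simpl.
  rewrite (isub_vs _ _ _ (fun A x => x)), isub_id, comp_id_l. reflexivity.
Qed.

Lemma soundness : forall G A (t u : tm G A), teq t u -> I t = I u.
Proof.
  intros G A t u H; induction H; simpl; try congruence.
  - apply bang_unique.
  - apply pairing_unique.
  - apply pi1_pairing.
  - apply pi2_pairing.
  - rewrite itm_wk. apply curry_unique.
  - rewrite itm_subst1. apply ev_curry_app.
  - symmetry. rewrite comp_assoc, Dpi2_st, pi2_pairing. reflexivity.
  - rewrite itm_subst1_wk. apply letmap_assoc_sem.
  - rewrite itm_subst1. apply letmap_ret_sem.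
Qed.
End Sound.
Definition Q (X Y : ty) := { P : tm [X] Y -> Prop | exists t, P = teq t }.
Definition cls {X Y} (t : tm [X] Y) : Q X Y := exist _ (teq t) (ex_intro _ t eq_refl).

Lemma Q_ext {X Y} (q q' : Q X Y) : proj1_sig q = proj1_sig q' -> q = q'.
Proof. destruct q, q'; simpl; intro; subst; f_equal; apply proof_irrelevance. Qed.

Lemma cls_eq {X Y} (t u : tm [X] Y) : teq t u -> cls t = cls u.
Proof.
  intro H; apply Q_ext; simpl. apply functional_extensionality; intro w.
  apply propositional_extensionality; split; intro; [rewrite <- H | rewrite H]; auto.
Qed.

Lemma cls_inj {X Y} (t u : tm [X] Y) : cls t = cls u -> teq t u.
Proof.
  intro H. apply (f_equal (@proj1_sig _ _)) in H. simpl in H.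
  assert (teq u u) by reflexivity. rewrite <- H in H0. auto.
Qed.

Definition rep {X Y} (q : Q X Y) : tm [X] Y :=
  proj1_sig (constructive_indefinite_description _ (proj2_sig q)).

Lemma rep_spec {X Y} (q : Q X Y) : cls (rep q) = q.
Proof.
  apply Q_ext. unfold rep. destruct (constructive_indefinite_description _ _) as [t e].
  simpl. auto.
Qed.

Lemma Q_surj {X Y} (q : Q X Y) : exists t, q = cls t.
Proof. exists (rep q). symmetry; apply rep_spec. Qed.

Lemma rep_cls {X Y} (t : tm [X] Y) : teq (rep (cls t)) t.
Proof. apply cls_inj. apply rep_spec. Qed.

Definition lift1 {X Y X' Y'} (F : tm [X] Y -> tm [X'] Y') (q : Q X Y) : Q X' Y' :=
  cls (F (rep q)).
Definition lift2 {X Y X' Y' X'' Y''} (F : tm [X] Y -> tm [X'] Y' -> tm [X''] Y'')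
  (q : Q X Y) (q' : Q X' Y') : Q X'' Y'' := cls (F (rep q) (rep q')).

Lemma lift1_cls {X Y X' Y'} (F : tm [X] Y -> tm [X'] Y') (t : tm [X] Y) :
  Proper (teq ==> teq) F -> lift1 F (cls t) = cls (F t).
Proof. intro HF. unfold lift1. apply cls_eq. apply HF. apply rep_cls. Qed.

Lemma lift2_cls {X Y X' Y' X'' Y''} (F : tm [X] Y -> tm [X'] Y' -> tm [X''] Y'') t u :
  Proper (teq ==> teq ==> teq) F -> lift2 F (cls t) (cls u) = cls (F t u).
Proof. intro HF. unfold lift2. apply cls_eq. apply HF; apply rep_cls. Qed.

Ltac qdestr := repeat match goal with q : Q _ _ |- _ => let t := fresh "t" in
  destruct (Q_surj q) as [t ->] end.

Lemma teq_subst_id1 {X A} (t : tm [X] A) (s : sub [X] [X]) :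
  teq (s X Vz) (tvar Vz) -> teq (subst s t) t.
Proof.
  intro H. rewrite <- (subst_ids _ _ t) at 2. apply teq_subst_pw1. auto.
Qed.

Definition z {X} : tm [X] X := tvar Vz.

Definition compT {X Y Z} (g : tm [Y] Z) (f : tm [X] Y) : tm [X] Z := subst (scons f E) g.
#[export] Instance compT_prop X Y Z : Proper (teq ==> teq ==> teq) (@compT X Y Z).
Proof.
  intros g g' Hg f f' Hf. unfold compT. rewrite Hg. apply teq_subst_pw1. simpl. auto.
Qed.

Definition curT {Z X Y} (f : tm [tyProd Z X] Y) : tm [Z] (tyArr X Y) :=
  tlam (subst (scons (tpair (tvar (Vs Vz)) (tvar Vz)) E) f).
#[export] Instance curT_prop Z X Y : Proper (teq ==> teq) (@curT Z X Y).
Proof. intros f f' H. unfold curT. rewrite H. reflexivity. Qed.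

#[export] Instance tpair_prop1 X A B : Proper (teq ==> teq ==> teq) (@tpair [X] A B).
Proof. apply pair_prop. Qed.

Definition tidm X : Q X X := cls z.
Definition tcomp {X Y Z} (g : Q Y Z) (f : Q X Y) : Q X Z := lift2 compT g f.
Definition tbang X : Q X tyUnit := cls tunit.
Definition tpi1 X Y : Q (tyProd X Y) X := cls (tfst z).
Definition tpi2 X Y : Q (tyProd X Y) Y := cls (tsnd z).
Definition tpairing {Z X Y} (f : Q Z X) (g : Q Z Y) : Q Z (tyProd X Y) := lift2 tpair f g.
Definition tev X Y : Q (tyProd (tyArr X Y) X) Y := cls (tapp (tfst z) (tsnd z)).
Definition tcurry {Z X Y} (f : Q (tyProd Z X) Y) : Q Z (tyArr X Y) := lift1 curT f.

Lemma tcomp_cls {X Y Z} (g : tm [Y] Z) (f : tm [X] Y) : tcomp (cls g) (cls f) = cls (compT g f).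
Proof. unfold tcomp. apply lift2_cls. apply compT_prop. Qed.
Lemma tpairing_cls {X Y Z} (f : tm [Z] X) (g : tm [Z] Y) : tpairing (cls f) (cls g) = cls (tpair f g).
Proof. unfold tpairing. apply lift2_cls. apply pair_prop. Qed.
Lemma tcurry_cls {Z X Y} (f : tm [tyProd Z X] Y) : tcurry (cls f) = cls (curT f).
Proof. unfold tcurry. apply lift1_cls. apply curT_prop. Qed.

Ltac qsimpl := unfold tidm, tbang, tpi1, tpi2, tev;
  repeat (rewrite ?tcomp_cls, ?tpairing_cls, ?tcurry_cls).

Lemma t_comp_assoc X Y Z W (f : Q X Y) (g : Q Y Z) (h : Q Z W) :
  tcomp h (tcomp g f) = tcomp (tcomp h g) f.
Proof.
  qdestr; qsimpl. f_equal. unfold compT. rewrite subst_subst. f_equal. apply fun1_ext. reflexivity.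
Qed.

Lemma t_comp_id_l X Y (f : Q X Y) : tcomp (tidm Y) f = f.
Proof. qdestr; qsimpl. reflexivity. Qed.

Lemma t_comp_id_r X Y (f : Q X Y) : tcomp f (tidm X) = f.
Proof.
  qdestr; qsimpl. f_equal. unfold compT. rewrite <- (subst_ids _ _ t) at 2.
  f_equal. apply fun1_ext. reflexivity.
Qed.

Lemma t_bang_unique X (f : Q X tyUnit) : f = tbang X.
Proof. qdestr; qsimpl. apply cls_eq. apply eq_unit_eta. Qed.

Lemma t_pi1_pairing Z X Y (f : Q Z X) (g : Q Z Y) : tcomp (tpi1 X Y) (tpairing f g) = f.
Proof. qdestr; qsimpl. apply cls_eq. apply eq_fst_beta. Qed.
Lemma t_pi2_pairing Z X Y (f : Q Z X) (g : Q Z Y) : tcomp (tpi2 X Y) (tpairing f g) = g.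
Proof. qdestr; qsimpl. apply cls_eq. apply eq_snd_beta. Qed.
Lemma t_pairing_unique Z X Y (h : Q Z (tyProd X Y)) :
  h = tpairing (tcomp (tpi1 X Y) h) (tcomp (tpi2 X Y) h).
Proof. qdestr; qsimpl. apply cls_eq. apply eq_prod_eta. Qed.

Lemma t_ev_curry Z X Y (f : Q (tyProd Z X) Y) :
  tcomp (tev X Y) (tpairing (tcomp (tcurry f) (tpi1 Z X)) (tpi2 Z X)) = f.
Proof.
  qdestr; qsimpl. apply cls_eq. unfold compT, curT; simpl.
  rewrite eq_fst_beta, eq_snd_beta, eq_arr_beta. unfold subst1. rewrite !subst_subst.
  apply teq_subst_id1. simpl. unfold ids, z. symmetry; apply eq_prod_eta.
Qed.

Lemma t_curry_unique Z X Y (h : Q Z (tyArr X Y)) :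
  h = tcurry (tcomp (tev X Y) (tpairing (tcomp h (tpi1 Z X)) (tpi2 Z X))).
Proof.
  qdestr; qsimpl. apply cls_eq. unfold compT, curT; simpl.
  rewrite eq_fst_beta, !eq_snd_beta, subst_subst.
  etransitivity; [apply eq_arr_eta|]. apply eq_lam, eq_app; [|reflexivity].
  unfold wk. rewrite rename_as_subst. apply teq_subst_pw1. simpl. symmetry; apply eq_fst_beta.
Qed.
Definition TM : CCC := {|
  obj := ty; hom := Q; idm := tidm; comp := @tcomp; comp_assoc := t_comp_assoc;
  comp_id_l := t_comp_id_l; comp_id_r := t_comp_id_r;
  one := tyUnit; bang := tbang; bang_unique := t_bang_unique;
  prod := tyProd; pi1 := tpi1; pi2 := tpi2; pairing := @tpairing;
  pi1_pairing := t_pi1_pairing; pi2_pairing := t_pi2_pairing; pairing_unique := t_pairing_unique;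
  expo := tyArr; ev := tev; curry := @tcurry; ev_curry := t_ev_curry; curry_unique := t_curry_unique |}.

Definition DmT {X Y} (f : tm [X] Y) : tm [tyDia X] (tyDia Y) :=
  tletmap z (subst (scons (tvar Vz) E) f).
#[export] Instance DmT_prop X Y : Proper (teq ==> teq) (@DmT X Y).
Proof. intros f f' H. unfold DmT. rewrite H. reflexivity. Qed.

Definition tDmap {X Y} (f : Q X Y) : Q (tyDia X) (tyDia Y) := lift1 DmT f.
Lemma tDmap_cls {X Y} (f : tm [X] Y) : tDmap (cls f) = cls (DmT f).
Proof. unfold tDmap. apply lift1_cls. apply DmT_prop. Qed.

Definition tst X Y : Q (tyProd X (tyDia Y)) (tyDia (tyProd X Y)) :=
  cls (tletmap (tsnd z) (tpair (tfst (tvar (Vs Vz))) (tvar Vz))).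
Definition teta X : Q X (tyDia X) := cls (tret z).

Ltac qdestr2 := repeat match goal with
  | q : Q _ _ |- _ => let t := fresh "t" in destruct (Q_surj q) as [t ->]
  | q : hom TM _ _ |- _ => let t := fresh "t" in destruct (Q_surj q) as [t ->]
  end.
Ltac qsimpl2 := unfold prodmap, assoc; simpl; unfold tidm, tbang, tpi1, tpi2, tev, tst, teta;
  repeat (rewrite ?tcomp_cls, ?tpairing_cls, ?tcurry_cls, ?tDmap_cls);
  apply cls_eq; unfold compT, DmT, z; simpl.

Ltac norm := repeat progress (unfold wk, subst1, subst1_wk, z in *; simpl;
   rewrite ?eq_fst_beta, ?eq_snd_beta, ?eq_letmap_assoc, ?eq_letmap_ret).
Ltac pw := repeat (rewrite ?subst_subst, ?subst_rename, ?rename_subst); apply teq_subst_pw1; simpl.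

Lemma t_Dmap_id X : tDmap (tidm X) = tidm (tyDia X).
Proof. qsimpl2. symmetry. apply eq_letmap_id. Qed.

Lemma t_Dmap_comp X Y Z (f : Q X Y) (g : Q Y Z) :
  tDmap (tcomp g f) = tcomp (tDmap g) (tDmap f).
Proof.
  qdestr2; qsimpl2. rewrite eq_letmap_assoc. unfold subst1_wk. rewrite !subst_subst.
  apply eq_letmap; [reflexivity|]. apply teq_subst_pw1. simpl. reflexivity.
Qed.

Lemma t_st_natural (X Y X' Y' : ty) (f : Q X X') (g : Q Y Y') :
  comp (c:=TM) (tst X' Y') (prodmap (C:=TM) f (tDmap g)) = comp (c:=TM) (tDmap (prodmap (C:=TM) f g)) (tst X Y).
Proof. qdestr2; qsimpl2. rewrite eq_snd_beta. unfold wk; simpl. rewrite eq_fst_beta.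
  rewrite !eq_letmap_assoc. unfold subst1_wk; simpl.
  repeat (rewrite ?subst_subst, ?subst_rename, ?rename_subst).
  apply eq_letmap; [reflexivity|]. apply eq_pair; pw; norm; reflexivity. Qed.

Lemma t_st_unit X : comp (c:=TM) (tDmap (pi2 (c:=TM) tyUnit X)) (tst tyUnit X) = pi2 (c:=TM) tyUnit (tyDia X).
Proof. qsimpl2. norm. symmetry; apply eq_letmap_id. Qed.

Lemma t_st_assoc X Y Z :
  comp (c:=TM) (tDmap (assoc (C:=TM) X Y Z)) (tst (prod (c:=TM) X Y) Z)
  = comp (c:=TM) (tst X (prod (c:=TM) Y Z)) (comp (c:=TM) (prodmap (C:=TM) (idm (c:=TM) X) (tst Y Z)) (assoc (C:=TM) X Y (tyDia Z))).
Proof. qsimpl2. norm. reflexivity. Qed.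

Lemma t_eta_natural (X Y : ty) (f : Q X Y) : comp (c:=TM) (tDmap f) (teta X) = comp (c:=TM) (teta Y) f.
Proof. qdestr2; qsimpl2. norm. apply eq_ret. rewrite !subst_subst. apply teq_subst_id1. simpl. reflexivity. Qed.

Lemma t_eta_strong X Y : comp (c:=TM) (tst X Y) (prodmap (C:=TM) (idm (c:=TM) X) (teta Y)) = teta (prod (c:=TM) X Y).
Proof. qsimpl2. norm. apply eq_ret. unfold ids. symmetry; apply eq_prod_eta. Qed.

Definition TMD : StrongPointed TM := {| Dob := (tyDia : obj TM -> obj TM);
  Dmap := @tDmap; Dmap_id := t_Dmap_id; Dmap_comp := t_Dmap_comp;
  st := tst; st_natural := t_st_natural; st_unit := t_st_unit; st_assoc := t_st_assoc;
  eta := teta; eta_natural := t_eta_natural; eta_strong := t_eta_strong |}.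
Notation ITY := (ity TMD tyBase).
Notation ICTX := (ictx TMD tyBase).
Notation ITM := (itm TMD tyBase).

Lemma ity_id : forall A, ITY A = A.
Proof. induction A; simpl; congruence. Qed.

Fixpoint ctxty (G : ctx) : ty := match G with [] => tyUnit | A :: G0 => tyProd (ctxty G0) A end.

Lemma ictx_id : forall G, ICTX G = ctxty G.
Proof. induction G; simpl; try rewrite ity_id; congruence. Qed.

Definition castQ {X X' Y Y'} (e1 : X = X') (e2 : Y = Y') (q : Q X Y) : Q X' Y' :=
  eq_rect Y (fun Y => Q X' Y) (eq_rect X (fun X => Q X Y) q X' e1) Y' e2.

Ltac pirr := repeat match goal with e : ?a = ?a |- _ =>
  rewrite (proof_irrelevance _ e eq_refl) in *; clear e end.

Lemma castQ_comp {X X' Y Y' Z Z'} (e1 : X = X') (e2 : Y = Y') (e3 : Z = Z') (g : Q Y Z) (f : Q X Y) :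
  castQ e1 e3 (tcomp g f) = tcomp (castQ e2 e3 g) (castQ e1 e2 f).
Proof. destruct e1, e2, e3; reflexivity. Qed.

Lemma castQ_pairing {X X' Y1 Y1' Y2 Y2'} (e1 : X = X') (ea : Y1 = Y1') (eb : Y2 = Y2')
  (e : tyProd Y1 Y2 = tyProd Y1' Y2') (f : Q X Y1) (g : Q X Y2) :
  castQ e1 e (tpairing f g) = tpairing (castQ e1 ea f) (castQ e1 eb g).
Proof. destruct e1, ea, eb; pirr; reflexivity. Qed.

Lemma castQ_curry {X X' Y1 Y1' Y2 Y2'} (e1 : X = X') (e1' : tyProd X Y1 = tyProd X' Y1')
  (eb : Y2 = Y2') (e : tyArr Y1 Y2 = tyArr Y1' Y2') (f : Q (tyProd X Y1) Y2) :
  castQ e1 e (tcurry f) = tcurry (castQ e1' eb f).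
Proof. destruct e1, eb. injection e1'; intros; subst. pirr; reflexivity. Qed.

Lemma castQ_Dmap {X X' Y Y'} (e1 : X = X') (e2 : Y = Y') (e1' : tyDia X = tyDia X')
  (e2' : tyDia Y = tyDia Y') (f : Q X Y) :
  castQ e1' e2' (tDmap f) = tDmap (castQ e1 e2 f).
Proof. destruct e1, e2; pirr; reflexivity. Qed.

Lemma castQ_cls {X Y} (e1 : X = X) (e2 : Y = Y) (q : Q X Y) : castQ e1 e2 q = q.
Proof. pirr; reflexivity. Qed.

Lemma castQ_pi1 {X X' Y Y'} (e1 : tyProd X Y = tyProd X' Y') (e2 : X = X') :
  castQ e1 e2 (tpi1 X Y) = tpi1 X' Y'.
Proof. injection e1; intros; subst. pirr. reflexivity. Qed.
Lemma castQ_pi2 {X X' Y Y'} (e1 : tyProd X Y = tyProd X' Y') (e2 : Y = Y') :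
  castQ e1 e2 (tpi2 X Y) = tpi2 X' Y'.
Proof. injection e1; intros; subst. pirr. reflexivity. Qed.
Lemma castQ_bang {X X'} (e1 : X = X') (e2 : tyUnit = tyUnit) : castQ e1 e2 (tbang X) = tbang X'.
Proof. destruct e1; pirr; reflexivity. Qed.
Lemma castQ_idm {X X'} (e1 e2 : X = X') : castQ e1 e2 (tidm X) = tidm X'.
Proof. destruct e1; pirr; reflexivity. Qed.
Lemma castQ_ev {X X' Y Y'} (e1 : tyProd (tyArr X Y) X = tyProd (tyArr X' Y') X') (e2 : Y = Y') :
  castQ e1 e2 (tev X Y) = tev X' Y'.
Proof. injection e1; intros; subst. pirr. reflexivity. Qed.
Lemma castQ_st {X X' Y Y'} (e1 : tyProd X (tyDia Y) = tyProd X' (tyDia Y'))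
  (e2 : tyDia (tyProd X Y) = tyDia (tyProd X' Y')) :
  castQ e1 e2 (tst X Y) = tst X' Y'.
Proof. injection e1; intros; subst. pirr. reflexivity. Qed.
Lemma castQ_eta {X X'} (e1 : X = X') (e2 : tyDia X = tyDia X') : castQ e1 e2 (teta X) = teta X'.
Proof. destruct e1; pirr; reflexivity. Qed.

Fixpoint unp (G : ctx) : sub G [ctxty G] :=
  match G return sub G [ctxty G] with
  | [] => E
  | A :: G0 => scons (tsnd z) (fun B w => subst (scons (tfst z) E) (unp G0 B w))
  end.

Lemma main_var : forall G A (x : var G A) e1 e2,
  castQ e1 e2 (ivar TMD tyBase x) = cls (unp G A x).
Proof.
  induction x; intros; simpl.
  - apply castQ_pi2.
  - rewrite (castQ_comp _ (ictx_id G)), IHx, castQ_pi1. unfold tpi1. rewrite tcomp_cls. reflexivity.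
Qed.
Lemma main_tm : forall G A (t : tm G A) e1 e2,
  castQ e1 e2 (ITM t) = cls (subst (unp G) t).
Proof.
  induction t; intros; simpl.
  - apply main_var.
  - apply castQ_bang.
  - rewrite (castQ_pairing _ (ity_id A) (ity_id B)), IHt1, IHt2, tpairing_cls. reflexivity.
  - rewrite (castQ_comp _ (f_equal2 tyProd (ity_id A) (ity_id B))), IHt, castQ_pi1.
    unfold tpi1. rewrite tcomp_cls. reflexivity.
  - rewrite (castQ_comp _ (f_equal2 tyProd (ity_id A) (ity_id B))), IHt, castQ_pi2.
    unfold tpi2. rewrite tcomp_cls. reflexivity.
  - rewrite (castQ_curry _ (f_equal2 tyProd (ictx_id G) (ity_id A)) (ity_id B)), IHt, (tcurry_cls (Z:=ctxty G) (X:=A)).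
    apply cls_eq. unfold curT. apply eq_lam. rewrite subst_subst. apply teq_subst_pw.
    apply var_cons_elim.
    + simpl. unfold z. apply eq_snd_beta.
    + intros. simpl. rewrite subst_subst. unfold wk. rewrite rename_as_subst.
      apply teq_subst_pw1. simpl. apply eq_fst_beta.
  - rewrite (castQ_comp _ (f_equal2 tyProd (f_equal2 tyArr (ity_id A) (ity_id B)) (ity_id A))),
      castQ_ev, (castQ_pairing _ (f_equal2 tyArr (ity_id A) (ity_id B)) (ity_id A)), IHt1, IHt2.
    unfold tev. rewrite tpairing_cls, tcomp_cls. apply cls_eq. unfold compT, z; simpl.
    rewrite eq_fst_beta, eq_snd_beta. reflexivity.
  - rewrite (castQ_comp _ (f_equal tyDia (f_equal2 tyProd (ictx_id G) (ity_id A)))).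
    rewrite (castQ_Dmap (f_equal2 tyProd (ictx_id G) (ity_id A)) (ity_id B)), IHt2.
    rewrite (castQ_comp _ (f_equal2 tyProd (ictx_id G) (f_equal tyDia (ity_id A)))), castQ_st.
    rewrite (castQ_pairing _ (ictx_id G) (ity_id (tyDia A))), castQ_idm, IHt1.
    unfold tidm, tst. rewrite tpairing_cls, tcomp_cls.
    rewrite (tDmap_cls (X:=tyProd (ctxty G) A)), tcomp_cls.
    apply cls_eq. unfold compT, DmT, z; simpl. norm. rewrite !subst_subst.
    apply eq_letmap; [apply eq_snd_beta|]. apply teq_subst_pw. apply var_cons_elim; simpl; [|intros].
    + apply eq_snd_beta.
    + rewrite subst_subst. unfold wk. rewrite (rename_as_subst _ _ (unp G B0 w)). apply teq_subst_pw1. simpl.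
      rewrite !eq_fst_beta. reflexivity.
  - rewrite (castQ_comp _ (ity_id A)), castQ_eta, IHt. unfold teta. rewrite tcomp_cls.
    reflexivity.
Qed.
Fixpoint pack (G : ctx) : tm G (ctxty G) :=
  match G return tm G (ctxty G) with
  | [] => tunit
  | A :: G0 => tpair (wk (pack G0)) (tvar Vz)
  end.

Lemma unp_pack : forall G B (x : var G B), teq (subst (scons (pack G) E) (unp G B x)) (tvar x).
Proof.
  induction G; intros B x.
  - destruct (var_nil x).
  - revert B x. apply var_cons_elim.
    + simpl. apply eq_snd_beta.
    + intros B w. simpl. rewrite subst_subst.
      transitivity (subst (scons (wk (B:=a) (pack G)) E) (unp G B w)).
      { apply teq_subst_pw1. simpl. apply eq_fst_beta. }
      transitivity (wk (B:=a) (subst (scons (pack G) E) (unp G B w))).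
      { unfold wk. rewrite rename_subst. apply teq_subst_pw1. simpl. reflexivity. }
      rewrite IHG. reflexivity.
Qed.

Lemma completeness : forall G A (t u : tm G A),
  (forall (C : CCC) (M : StrongPointed C) (b : obj C), itm M b t = itm M b u) -> teq t u.
Proof.
  intros G A t u H. specialize (H TM TMD tyBase).
  apply (f_equal (castQ (ictx_id G) (ity_id A))) in H. rewrite !main_tm in H.
  apply cls_inj in H. assert (H2 := teq_subst _ _ _ _ H _ (scons (pack G) E)).
  rewrite !subst_subst in H2.
  rewrite <- (subst_ids _ _ t), <- (subst_ids _ _ u).
  transitivity (subst (fun B x => subst (scons (pack G) E) (unp G B x)) t).
  { symmetry; apply teq_subst_pw; intros; apply unp_pack. }
  rewrite H2. apply teq_subst_pw; intros; apply unp_pack.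
Qed.

Theorem proposition3p2 :
  forall (G : ctx) (A : ty) (t u : tm G A),
    teq t u <->
    (forall (C : CCC) (M : StrongPointed C) (b : obj C), itm M b t = itm M b u).
Proof.
  intros G A t u; split.
  - intros H C M b. apply soundness; auto.
  - apply completeness.
Qed.
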